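(* Let $t$ be an $\mathrm{SL}_2$-tiling with enough ones. Then there exist $(x_\alpha,y_\alpha)\in\mathbb{Z}\times\mathbb{Z}$ for $\alpha\in\mathbb{Z}$ such that: (i) $t_{xy}=1$ if and only if $(x,y)=(x_\alpha,y_\alpha)$ for some $\alpha$; (ii) for each $\alpha$, either (a) $x_{\alpha+1}<x_\alpha$ and $y_{\alpha+1}=y_\alpha$, or (b) $x_{\alpha+1}=x_\alpha$ and $y_{\alpha+1}>y_\alpha$; (iii) as $\alpha\to\infty$ and as $\alpha\to-\infty$, there are infinitely many switches between options (a) and (b). Moreover, the $(x_\alpha,y_\alpha)$ with these properties are unique up to replacing $\alpha$ by $\alpha+k$ for a constant integer $k$.
   Context: An $\mathrm{SL}_2$-tiling is a map $t:\mathbb{Z}\times\mathbb{Z}\to\{1,2,3,\dots\}$, $(i,j)\mapsto t_{ij}$, with $t_{ij}t_{i+1,j+1}-t_{i,j+1}t_{i+1,j}=1$ for all $i,j$. It has enough ones if for every $(i,j)$ there is $(p,q)$ with $p<i,\ q>j$ and $t_{pq}=1$, and there is $(p,q)$ with $p>i,\ q<j$ and $t_{pq}=1$. *)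

(* Defs.v *)
From Stdlib Require Import ZArith.
Open Scope Z_scope.

Definition SL2_tiling (t : Z -> Z -> Z) : Prop :=
  (forall i j, 1 <= t i j) /\
  (forall i j, t i j * t (i+1) (j+1) - t i (j+1) * t (i+1) j = 1).

Definition enough_ones (t : Z -> Z -> Z) : Prop :=
  forall i j,
    (exists p q, p < i /\ q > j /\ t p q = 1) /\
    (exists p q, p > i /\ q < j /\ t p q = 1).

Definition optA (x y : Z -> Z) (a : Z) : Prop :=
  x (a+1) < x a /\ y (a+1) = y a.
Definition optB (x y : Z -> Z) (a : Z) : Prop :=
  x (a+1) = x a /\ y (a+1) > y a.

Definition switch_at (x y : Z -> Z) (a : Z) : Prop :=
  (optA x y a /\ optB x y (a+1)) \/ (optB x y a /\ optA x y (a+1)).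

Definition ones_sequence (t : Z -> Z -> Z) (x y : Z -> Z) : Prop :=
  (forall p q, t p q = 1 <-> exists a, p = x a /\ q = y a) /\
  (forall a, optA x y a \/ optB x y a) /\
  (forall N, exists a, N <= a /\ switch_at x y a) /\
  (forall N, exists a, a <= N /\ switch_at x y a).

(* Main.v *)
Require Import Defs.
From Stdlib Require Import ZArith Lia.
From Stdlib Require Import Classical IndefiniteDescription.
Open Scope Z_scope.

Lemma Zind_up (P : Z -> Prop) (N : Z) :
  P N -> (forall a, N <= a -> P a -> P (a+1)) -> forall a, N <= a -> P a.
Proof.
  intros H0 HS a Ha.
  replace a with (N + Z.of_nat (Z.to_nat (a - N))) by lia.
  induction (Z.to_nat (a - N)) as [|k IH].
  - simpl. rewrite Z.add_0_r. auto.
  - rewrite Nat2Z.inj_succ.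
    replace (N + Z.succ (Z.of_nat k)) with (N + Z.of_nat k + 1) by lia.
    apply HS; [lia|auto].
Qed.

Lemma Zind_down (P : Z -> Prop) (N : Z) :
  P N -> (forall a, a <= N -> P a -> P (a-1)) -> forall a, a <= N -> P a.
Proof.
  intros H0 HS a Ha.
  replace a with (N - Z.of_nat (Z.to_nat (N - a))) by lia.
  induction (Z.to_nat (N - a)) as [|k IH].
  - simpl. rewrite Z.sub_0_r. auto.
  - rewrite Nat2Z.inj_succ.
    replace (N - Z.succ (Z.of_nat k)) with (N - Z.of_nat k - 1) by lia.
    apply HS; [lia|auto].
Qed.

Lemma minor_rows t : SL2_tiling t ->
  forall i j j', j < j' -> t i j * t (i+1) j' > t i j' * t (i+1) j.
Proof.
  intros [Hpos Hdet] i j j' H.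
  apply (Zind_up (fun j' => t i j * t (i+1) j' > t i j' * t (i+1) j) (j+1)); [| |lia].
  - specialize (Hdet i j). lia.
  - intros a Ha IH. specialize (Hdet i a).
    pose proof (Hpos i a). pose proof (Hpos i j). pose proof (Hpos (i+1) j).
    pose proof (Hpos (i+1) a). pose proof (Hpos i (a+1)). pose proof (Hpos (i+1) (a+1)).
    assert (t i a * (t i j * t (i+1) (a+1)) > t i a * (t i (a+1) * t (i+1) j)) by nia.
    nia.
Qed.

Lemma minor_pos t : SL2_tiling t ->
  forall i i' j j', i < i' -> j < j' -> t i j * t i' j' > t i j' * t i' j.
Proof.
  intros Ht i i' j j' Hi Hj. pose proof Ht as [Hpos _].
  apply (Zind_up (fun i' => t i j * t i' j' > t i j' * t i' j) (i+1)); [| |lia].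
  - apply minor_rows; auto.
  - intros a Ha IH. pose proof (minor_rows t Ht a j j' Hj).
    pose proof (Hpos i j). pose proof (Hpos i j'). pose proof (Hpos a j).
    pose proof (Hpos a j'). pose proof (Hpos (a+1) j). pose proof (Hpos (a+1) j').
    assert (t a j * t a j' * (t i j * t (a+1) j') > t a j * t a j' * (t i j' * t (a+1) j)) by nia.
    nia.
Qed.

Lemma no_SE t p q p' q' : SL2_tiling t -> t p q = 1 -> t p' q' = 1 -> p < p' -> q < q' -> False.
Proof.
  intros Ht H1 H2 Hp Hq. pose proof (minor_pos t Ht p p' q q' Hp Hq).
  destruct Ht as [Hpos _]. pose proof (Hpos p q'). pose proof (Hpos p' q). nia.
Qed.

Definition Yf (t : Z -> Z -> Z) p q r := t r q * t p (q+1) - t r (q+1).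
Definition Wf (t : Z -> Z -> Z) p q s := t (p-1) q * t p s - t (p-1) s.

Lemma relY t p q : SL2_tiling t -> forall r, Yf t p q r * t (r+1) q - t r q * Yf t p q (r+1) = 1.
Proof. intros [_ Hdet] r. unfold Yf. specialize (Hdet r q). lia. Qed.

Lemma relW t p q : SL2_tiling t -> forall s, t p s * Wf t p q (s+1) - Wf t p q s * t p (s+1) = 1.
Proof. intros [_ Hdet] s. unfold Wf. specialize (Hdet (p-1) s).
  replace (p-1+1) with p in Hdet by lia. lia. Qed.

Lemma rank t p q : SL2_tiling t -> t p q = 1 ->
  forall r, r <= p -> forall s, q <= s -> t r s = t r q * t p s - Yf t p q r * Wf t p q s.
Proof.
  intros Ht H1. pose proof Ht as [Hpos Hdet].
  apply (Zind_down (fun r => forall s, q <= s -> t r s = t r q * t p s - Yf t p q r * Wf t p q s) p).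
  - intros s _. unfold Yf. rewrite H1. lia.
  - intros a Ha IHa.
    apply (Zind_up (fun s => t (a-1) s = t (a-1) q * t p s - Yf t p q (a-1) * Wf t p q s) q).
    + unfold Wf. rewrite H1. lia.
    + intros s Hs IHs.
      pose proof (relY t p q Ht (a-1)) as HY. replace (a-1+1) with a in HY by lia.
      pose proof (relW t p q Ht s) as HW.
      pose proof (Hdet (a-1) s) as HD. replace (a-1+1) with a in HD by lia.
      pose proof (IHa s Hs) as E1. pose proof (IHa (s+1) ltac:(lia)) as E2.
      pose proof (Hpos a s).
      set (X := t (a-1) q) in *. set (X' := t a q) in *.
      set (Z0 := t p s) in *. set (Z' := t p (s+1)) in *.
      set (Y := Yf t p q (a-1)) in *. set (Y' := Yf t p q a) in *.
      set (W := Wf t p q s) in *. set (W' := Wf t p q (s+1)) in *.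
      assert (Hid : (X*Z0 - Y*W)*(X'*Z' - Y'*W') - (X*Z' - Y*W')*(X'*Z0 - Y'*W)
                   = (Y*X' - X*Y')*(Z0*W' - W*Z')) by ring.
      rewrite HY, HW in Hid. rewrite <- IHs, <- E1, <- E2 in Hid.
      assert (t (a-1) (s+1) * t a s = (X*Z' - Y*W') * t a s) by lia.
      apply (Z.mul_reg_r _ _ (t a s)); lia.
Qed.

Lemma Ynonneg t p q : SL2_tiling t -> t p q = 1 -> forall r, r <= p -> Yf t p q r >= 0.
Proof.
  intros Ht H1. pose proof Ht as [Hpos _].
  apply (Zind_down (fun r => Yf t p q r >= 0) p).
  - unfold Yf. rewrite H1. lia.
  - intros a Ha IH. pose proof (relY t p q Ht (a-1)) as HY. replace (a-1+1) with a in HY by lia.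
    pose proof (Hpos a q). pose proof (Hpos (a-1) q). nia.
Qed.

Lemma Wnonneg t p q : SL2_tiling t -> t p q = 1 -> forall s, q <= s -> Wf t p q s >= 0.
Proof.
  intros Ht H1. pose proof Ht as [Hpos _].
  apply (Zind_up (fun s => Wf t p q s >= 0) q).
  - unfold Wf. rewrite H1. lia.
  - intros a Ha IH. pose proof (relW t p q Ht a) as HW.
    pose proof (Hpos p a). pose proof (Hpos p (a+1)). nia.
Qed.

Lemma colstep t p q : SL2_tiling t -> t p q = 1 -> forall r, r <= p ->
  t r q > Yf t p q r \/ exists r', r <= r' < p /\ t r' q = 1.
Proof.
  intros Ht H1. pose proof Ht as [Hpos _].
  apply (Zind_down (fun r => t r q > Yf t p q r \/ exists r', r <= r' < p /\ t r' q = 1) p).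
  - left. unfold Yf. rewrite H1. lia.
  - intros a Ha [IH | [r' [Hr' Hr'1]]].
    + pose proof (relY t p q Ht (a-1)) as HY. replace (a-1+1) with a in HY by lia.
      pose proof (Ynonneg t p q Ht H1 a Ha). pose proof (Ynonneg t p q Ht H1 (a-1) ltac:(lia)).
      pose proof (Hpos (a-1) q). pose proof (Hpos a q).
      destruct (Z.lt_total (Yf t p q (a-1)) (t (a-1) q)) as [Hl | [He | Hg]].
      * left; lia.
      * right. exists (a-1). split; [lia|].
        rewrite <- He in HY.
        assert (Yf t p q (a - 1) * (t a q - Yf t p q a) = 1) by lia. nia.
      * exfalso. nia.
    + right. exists r'. split; [lia|auto].
Qed.

Lemma rowstep t p q : SL2_tiling t -> t p q = 1 -> forall s, q <= s ->
  t p s > Wf t p q s \/ exists s', q < s' <= s /\ t p s' = 1.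
Proof.
  intros Ht H1. pose proof Ht as [Hpos _].
  apply (Zind_up (fun s => t p s > Wf t p q s \/ exists s', q < s' <= s /\ t p s' = 1) q).
  - left. unfold Wf. rewrite H1. lia.
  - intros a Ha [IH | [s' [Hs' Hs'1]]].
    + pose proof (relW t p q Ht a) as HW.
      pose proof (Wnonneg t p q Ht H1 a Ha). pose proof (Wnonneg t p q Ht H1 (a+1) ltac:(lia)).
      pose proof (Hpos p a). pose proof (Hpos p (a+1)).
      destruct (Z.lt_total (Wf t p q (a+1)) (t p (a+1))) as [Hl | [He | Hg]].
      * left; lia.
      * right. exists (a+1). split; [lia|].
        rewrite He in HW.
        assert (t p (a+1) * (t p a - Wf t p q a) = 1) by lia. nia.
      * exfalso. nia.
    + right. exists s'. split; [lia|auto].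
Qed.

Lemma claimC t p q p' q' : SL2_tiling t -> t p q = 1 -> t p' q' = 1 -> p' < p -> q < q' ->
  exists r s, t r s = 1 /\ p' <= r <= p /\ q <= s <= q' /\ (r < p \/ q < s) /\ (p' < r \/ s < q').
Proof.
  intros Ht H1 H2 Hp Hq.
  pose proof (rank t p q Ht H1 p' ltac:(lia) q' ltac:(lia)) as HR. rewrite H2 in HR.
  pose proof (Ynonneg t p q Ht H1 p' ltac:(lia)). pose proof (Wnonneg t p q Ht H1 q' ltac:(lia)).
  pose proof (relY t p q Ht (p-1)) as HY1. replace (p-1+1) with p in HY1 by lia.
  destruct (colstep t p q Ht H1 p' ltac:(lia)) as [Hc | [r' [Hr' Hr'1]]].
  - destruct (rowstep t p q Ht H1 q' ltac:(lia)) as [Hrw | [s' [Hs' Hs'1]]].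
    + exfalso.
      assert (Yf t p q p' >= 1).
      {
        assert (forall r, r < p -> Yf t p q r >= 1) as HY.
        { intros r Hrr. pose proof (relY t p q Ht r) as E.
          pose proof (Ynonneg t p q Ht H1 (r+1) ltac:(lia)). pose proof (Ynonneg t p q Ht H1 r ltac:(lia)).
          destruct Ht as [Hpos _]. pose proof (Hpos (r+1) q). pose proof (Hpos r q). nia. }
        apply HY; lia. }
      nia.
    + exists p, s'. repeat split; try lia; auto.
  - exists r', q. repeat split; try lia; auto.
Qed.

Lemma fmono (x y : Z -> Z) : (forall a, optA x y a \/ optB x y a) ->
  forall a b, a < b -> y a - x a < y b - x b.
Proof.
  intros H a b Hab.
  apply (Zind_up (fun b => y a - x a < y b - x b) (a+1)); [| |lia].
  - destruct (H a) as [[? ?]|[? ?]]; lia.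
  - intros c Hc IH. destruct (H c) as [[? ?]|[? ?]]; lia.
Qed.

Lemma f_idx (x y : Z -> Z) : (forall a, optA x y a \/ optB x y a) ->
  forall a b, y a - x a < y b - x b -> a < b.
Proof.
  intros H a b Hf. destruct (Z.lt_total a b) as [?|[?|?]]; auto; subst.
  - lia.
  - pose proof (fmono x y H b a). lia.
Qed.

Lemma xymono (x y : Z -> Z) : (forall a, optA x y a \/ optB x y a) ->
  forall b c, b <= c -> x c <= x b /\ y b <= y c.
Proof.
  intros H b c Hbc.
  apply (Zind_up (fun c => x c <= x b /\ y b <= y c) b); [lia| |lia].
  intros a Ha IH. destruct (H a) as [[? ?]|[? ?]]; lia.
Qed.

Lemma uniq_seq t x y x' y' : ones_sequence t x y -> ones_sequence t x' y' ->
  exists k, forall a, x' a = x (a+k) /\ y' a = y (a+k).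
Proof.
  intros [Hi [Hii _]] [Hi' [Hii' _]].
  destruct (proj1 (Hi (x' 0) (y' 0)) (proj2 (Hi' _ _) (ex_intro _ 0 (conj eq_refl eq_refl))))
    as [k [Hk1 Hk2]].
  exists k.
  assert (step : forall a, x' a = x (a+k) /\ y' a = y (a+k) ->
             (x' (a+1) = x (a+1+k) /\ y' (a+1) = y (a+1+k))).
  { intros a [E1 E2].
    destruct (proj1 (Hi (x' (a+1)) (y' (a+1))) (proj2 (Hi' _ _) (ex_intro _ (a+1) (conj eq_refl eq_refl))))
      as [m [Hm1 Hm2]].
    destruct (proj1 (Hi' (x (a+1+k)) (y (a+1+k))) (proj2 (Hi _ _) (ex_intro _ (a+1+k) (conj eq_refl eq_refl))))
      as [n [Hn1 Hn2]].
    pose proof (fmono x' y' Hii' a (a+1) ltac:(lia)).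
    assert (a + k < m) by (apply (f_idx x y Hii); lia).
    pose proof (fmono x y Hii (a+k) (a+1+k) ltac:(lia)).
    assert (a < n) by (apply (f_idx x' y' Hii'); lia).
    destruct (Z.eq_dec m (a+1+k)) as [->|Hne]; [auto|].
    exfalso. pose proof (fmono x y Hii (a+1+k) m ltac:(lia)).
    assert (n < a+1) by (apply (f_idx x' y' Hii'); lia). lia. }
  assert (stepd : forall a, x' a = x (a+k) /\ y' a = y (a+k) ->
             (x' (a-1) = x (a-1+k) /\ y' (a-1) = y (a-1+k))).
  { intros a [E1 E2].
    destruct (proj1 (Hi (x' (a-1)) (y' (a-1))) (proj2 (Hi' _ _) (ex_intro _ (a-1) (conj eq_refl eq_refl))))
      as [m [Hm1 Hm2]].
    destruct (proj1 (Hi' (x (a-1+k)) (y (a-1+k))) (proj2 (Hi _ _) (ex_intro _ (a-1+k) (conj eq_refl eq_refl))))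
      as [n [Hn1 Hn2]].
    pose proof (fmono x' y' Hii' (a-1) a ltac:(lia)).
    assert (m < a + k) by (apply (f_idx x y Hii); lia).
    pose proof (fmono x y Hii (a-1+k) (a+k) ltac:(lia)).
    assert (n < a) by (apply (f_idx x' y' Hii'); lia).
    destruct (Z.eq_dec m (a-1+k)) as [->|Hne]; [auto|].
    exfalso. pose proof (fmono x y Hii m (a-1+k) ltac:(lia)).
    assert (a-1 < n) by (apply (f_idx x' y' Hii'); lia). lia. }
  intros a. destruct (Z.le_gt_cases 0 a).
  - apply (Zind_up (fun a => x' a = x (a+k) /\ y' a = y (a+k)) 0); auto.
  - apply (Zind_down (fun a => x' a = x (a+k) /\ y' a = y (a+k)) 0); auto; lia.
Qed.

Lemma switches t x y : enough_ones t ->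
  (forall p q, t p q = 1 <-> exists a, p = x a /\ q = y a) ->
  (forall a, optA x y a \/ optB x y a) ->
  (forall N, exists a, N <= a /\ switch_at x y a) /\ (forall N, exists a, a <= N /\ switch_at x y a).
Proof.
  intros He Hi Hii. split; intro N; apply NNPP; intro Hno.
  - assert (ns : forall a, N <= a -> ~ switch_at x y a) by (intros a Ha Hs; apply Hno; eauto).
    destruct (Hii N) as [HA|HB].
    + assert (allA : forall a, N <= a -> optA x y a).
      { apply Zind_up; auto. intros a Ha IH. destruct (Hii (a+1)) as [?|HB']; auto.
        exfalso; apply (ns a Ha); left; auto. }
      assert (yc : forall a, N <= a -> y a = y N).
      { apply Zind_up; auto. intros a Ha IH. destruct (allA a Ha). lia. }
      destruct (proj1 (He 0 (y N))) as [p [q [Hp [Hq H1]]]].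
      destruct (proj1 (Hi p q) H1) as [b [-> ->]].
      destruct (Z.le_gt_cases N b).
      * rewrite yc in Hq; auto; lia.
      * pose proof (xymono x y Hii b N ltac:(lia)). lia.
    + assert (allB : forall a, N <= a -> optB x y a).
      { apply Zind_up; auto. intros a Ha IH. destruct (Hii (a+1)) as [HA'|?]; auto.
        exfalso; apply (ns a Ha); right; auto. }
      assert (xc : forall a, N <= a -> x a = x N).
      { apply Zind_up; auto. intros a Ha IH. destruct (allB a Ha). lia. }
      destruct (proj1 (He (x N) 0)) as [p [q [Hp [Hq H1]]]].
      destruct (proj1 (Hi p q) H1) as [b [-> ->]].
      destruct (Z.le_gt_cases N b).
      * rewrite xc in Hp; auto; lia.
      * pose proof (xymono x y Hii b N ltac:(lia)). lia.
  - assert (ns : forall a, a <= N -> ~ switch_at x y a) by (intros a Ha Hs; apply Hno; eauto).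
    destruct (Hii N) as [HA|HB].
    + assert (allA : forall a, a <= N -> optA x y a).
      { apply Zind_down; auto. intros a Ha IH. destruct (Hii (a-1)) as [?|HB']; auto.
        exfalso; apply (ns (a-1)); [lia|]; right; split; auto.
        replace (a-1+1) with a by lia; auto. }
      assert (yc : forall a, a <= N -> y a = y N).
      { apply Zind_down; auto. intros a Ha IH. destruct (allA (a-1) ltac:(lia)) as [_ E].
        replace (a-1+1) with a in E by lia. lia. }
      destruct (proj2 (He 0 (y N))) as [p [q [Hp [Hq H1]]]].
      destruct (proj1 (Hi p q) H1) as [b [-> ->]].
      destruct (Z.le_gt_cases b N).
      * rewrite yc in Hq; auto; lia.
      * pose proof (xymono x y Hii N b ltac:(lia)). lia.
    + assert (allB : forall a, a <= N -> optB x y a).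
      { apply Zind_down; auto. intros a Ha IH. destruct (Hii (a-1)) as [HA'|?]; auto.
        exfalso; apply (ns (a-1)); [lia|]; left; split; auto.
        replace (a-1+1) with a by lia; auto. }
      assert (xc : forall a, a <= N -> x a = x N).
      { apply Zind_down; auto. intros a Ha IH. destruct (allB (a-1) ltac:(lia)) as [E _].
        replace (a-1+1) with a in E by lia. lia. }
      destruct (proj2 (He (x N) 0)) as [p [q [Hp [Hq H1]]]].
      destruct (proj1 (Hi p q) H1) as [b [-> ->]].
      destruct (Z.le_gt_cases b N).
      * rewrite xc in Hp; auto; lia.
      * pose proof (xymono x y Hii N b ltac:(lia)). lia.
Qed.

Lemma exists_min (P : Z -> Prop) n : (exists m, P m /\ n < m) ->
  exists m, P m /\ n < m /\ forall k, P k -> n < k -> m <= k.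
Proof.
  intros [m0 [H0 H1]].
  assert (G : forall d : nat, forall m, (Z.to_nat (m - n) <= d)%nat -> P m -> n < m ->
            exists m', P m' /\ n < m' /\ forall k, P k -> n < k -> m' <= k).
  { induction d as [|d IH]; intros m Hd Hm Hnm.
    - lia.
    - destruct (classic (exists k, P k /\ n < k /\ k < m)) as [[k [Hk [Hk1 Hk2]]]|Hn].
      + apply (IH k); auto; lia.
      + exists m. repeat split; auto. intros k Hk Hnk.
        destruct (Z_lt_ge_dec k m); [exfalso; apply Hn; eauto | lia]. }
  apply (G (Z.to_nat (m0 - n)) m0); auto.
Qed.

Lemma exists_max (P : Z -> Prop) n : (exists m, P m /\ m < n) ->
  exists m, P m /\ m < n /\ forall k, P k -> k < n -> k <= m.
Proof.
  intros [m0 [H0 H1]].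
  destruct (exists_min (fun k => P (-k)) (-n)) as [m [Hm [Hm1 Hm2]]].
  - exists (-m0). rewrite Z.opp_involutive. split; auto; lia.
  - exists (-m). repeat split; auto; try lia.
    intros k Hk Hkn. assert (m <= -k) by (apply Hm2; [rewrite Z.opp_involutive|]; auto; lia). lia.
Qed.

Lemma existence t : SL2_tiling t -> enough_ones t -> exists x y, ones_sequence t x y.
Proof.
  intros Ht He.
  set (F := fun n => exists p, t p (p+n) = 1).
  assert (Fup : forall N, exists n, F n /\ N < n).
  { intro N. destruct (proj1 (He 0 N)) as [p [q [Hp [Hq H1]]]].
    exists (q - p). split; [exists p; replace (p + (q-p)) with q by lia; auto | lia]. }
  assert (Fdown : forall N, exists n, F n /\ n < N).
  { intro N. destruct (proj2 (He 0 N)) as [p [q [Hp [Hq H1]]]].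
    exists (q - p). split; [exists p; replace (p + (q-p)) with q by lia; auto | lia]. }
  assert (HS : forall n, exists m, F m /\ n < m /\ forall k, F k -> n < k -> m <= k)
    by (intro n; apply exists_min; auto).
  assert (HP : forall n, exists m, F m /\ m < n /\ forall k, F k -> k < n -> k <= m)
    by (intro n; apply exists_max; auto).
  destruct (functional_choice _ HS) as [sc Hsc].
  destruct (functional_choice _ HP) as [pc Hpc].
  assert (SP : forall m, F m -> sc (pc m) = m).
  { intros m Fm. destruct (Hpc m) as [A1 [A2 A3]]. destruct (Hsc (pc m)) as [B1 [B2 B3]].
    specialize (B3 m Fm A2). destruct (Z.eq_dec (sc (pc m)) m); auto.
    specialize (A3 _ B1 ltac:(lia)). lia. }
  assert (PS : forall m, F m -> pc (sc m) = m).
  { intros m Fm. destruct (Hsc m) as [A1 [A2 A3]]. destruct (Hpc (sc m)) as [B1 [B2 B3]].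
    specialize (B3 m Fm A2). destruct (Z.eq_dec (pc (sc m)) m); auto.
    specialize (A3 _ B1 ltac:(lia)). lia. }
  destruct (Fup 0) as [n0 [Fn0 _]].
  set (gp := fun k : nat => Nat.iter k sc n0).
  set (gm := fun k : nat => Nat.iter k pc n0).
  set (g := fun a => if Z.leb 0 a then gp (Z.to_nat a) else gm (Z.to_nat (-a))).
  assert (Fgp : forall k, F (gp k)).
  { induction k; simpl; auto. apply (Hsc _). }
  assert (Fgm : forall k, F (gm k)).
  { induction k; simpl; auto. apply (Hpc _). }
  assert (gpos : forall a, 0 <= a -> g a = gp (Z.to_nat a)).
  { intros a Ha. unfold g. destruct (Z.leb_spec 0 a); auto; lia. }
  assert (gneg : forall a, a <= 0 -> g a = gm (Z.to_nat (-a))).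
  { intros a Ha. unfold g. destruct (Z.leb_spec 0 a); auto.
    assert (a = 0) by lia. subst. reflexivity. }
  assert (Fg : forall a, F (g a)).
  { intro a. unfold g. destruct (Z.leb 0 a); auto. }
  assert (gS : forall a, g (a+1) = sc (g a)).
  { intro a. destruct (Z_le_gt_dec 0 a).
    - rewrite !gpos by lia. replace (Z.to_nat (a+1)) with (S (Z.to_nat a)) by lia. reflexivity.
    - rewrite !gneg by lia. replace (Z.to_nat (-a)) with (S (Z.to_nat (-(a+1)))) by lia.
      simpl. rewrite SP; auto. }
  assert (gP : forall a, g (a-1) = pc (g a)).
  { intro a. replace a with (a-1+1) at 2 by lia. rewrite gS. rewrite PS; auto. }
  assert (gsurj : forall d : nat, forall m, F m -> (Z.to_nat (Z.abs (m - n0)) <= d)%nat ->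
             exists a, g a = m).
  { induction d as [|d IH]; intros m Fm Hd.
    - exists 0. rewrite gpos by lia. simpl. lia.
    - destruct (Z.lt_total n0 m) as [Hl|[He0|Hg]].
      + destruct (Hpc m) as [A1 [A2 A3]]. specialize (A3 n0 Fn0 Hl).
        destruct (IH (pc m) A1 ltac:(lia)) as [a Ha].
        exists (a+1). rewrite gS, Ha. auto.
      + exists 0. rewrite gpos by lia. simpl. lia.
      + destruct (Hsc m) as [A1 [A2 A3]]. specialize (A3 n0 Fn0 Hg).
        destruct (IH (sc m) A1 ltac:(lia)) as [a Ha].
        exists (a-1). rewrite gP, Ha. auto. }
  assert (HX : forall a, exists p, t p (p + g a) = 1) by (intro a; apply (Fg a)).
  destruct (functional_choice _ HX) as [xf Hxf].
  exists xf, (fun a => xf a + g a).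
  assert (Hi : forall p q, t p q = 1 <-> exists a, p = xf a /\ q = xf a + g a).
  { intros p q. split.
    - intro H1. assert (F (q - p)) by (exists p; replace (p + (q-p)) with q by lia; auto).
      destruct (gsurj _ (q-p) H (Nat.le_refl _)) as [a Ha].
      pose proof (Hxf a) as H2.
      assert (p = xf a).
      { destruct (Z.lt_total p (xf a)) as [?|[?|?]]; auto; exfalso.
        - apply (no_SE t p q (xf a) (xf a + g a)); auto; lia.
        - apply (no_SE t (xf a) (xf a + g a) p q); auto; lia. }
      exists a. split; auto. lia.
    - intros [a [-> ->]]. apply Hxf. }
  assert (Hii : forall a, optA xf (fun a => xf a + g a) a \/ optB xf (fun a => xf a + g a) a).
  { intro a. unfold optA, optB. rewrite gS.
    pose proof (Hxf a) as H1. pose proof (Hxf (a+1)) as H2. rewrite gS in H2.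
    destruct (Hsc (g a)) as [A1 [A2 A3]].
    set (p := xf a) in *. set (p' := xf (a+1)) in *. set (n := g a) in *. set (m := sc n) in *.
    assert (C1 : ~ (p < p' /\ n + p < m + p')) by (intros [? ?]; apply (no_SE t p (p+n) p' (p'+m)); auto; lia).
    assert (C2 : ~ (p' < p /\ m + p' < n + p)) by (intros [? ?]; apply (no_SE t p' (p'+m) p (p+n)); auto; lia).
    destruct (Z.eq_dec p' p) as [E|E]; [right; lia|].
    destruct (Z.eq_dec (p'+m) (p+n)) as [E2|E2]; [left; lia|].
    exfalso.
    destruct (claimC t p (p+n) p' (p'+m) Ht H1 H2 ltac:(lia) ltac:(lia)) as [r [s [Hrs [B1 [B2 [B3 B4]]]]]].
    assert (F (s - r)) by (exists r; replace (r + (s-r)) with s by lia; auto).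
    specialize (A3 _ H ltac:(lia)). lia. }
  split; [exact Hi|]. split; [exact Hii|].
  apply (switches t); auto.
Qed.

Theorem proposition8p2 (t : Z -> Z -> Z) :
  SL2_tiling t -> enough_ones t ->
  (exists x y : Z -> Z, ones_sequence t x y) /\
  (forall x y x' y' : Z -> Z, ones_sequence t x y -> ones_sequence t x' y' ->
     exists k : Z, forall a, x' a = x (a + k) /\ y' a = y (a + k)).
Proof.
  intros Ht He. split.
  - apply existence; auto.
  - intros x y x' y'. apply uniq_seq.
Qed.
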